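(* Let $T>0$, $c>0$, let $U\subseteq\mathbb{R}^k$, and let $f:[0,T]\times\mathbb{R}^n\times U\to\mathbb{R}^n$ be continuous and continuously differentiable in its second argument. Let $\|\cdot\|$ be a norm on $\mathbb{R}^n$ with dual norm $\|\cdot\|_\star$. Consider the system $\dot x(t)=f(t,x(t),u(t))$ and its adjoint (costate) system $\dot\lambda(t)=-D_xf(t,x(t),u(t))^\top\lambda(t)-v(t)$ on $[0,T]$, with inputs $x(t)\in\mathbb{R}^n$, $u(t)\in U$, $v(t)\in\mathbb{R}^n$, and let $\Lambda^{\leftarrow}(t)=\lambda(T-t)$ be the time-reversed costate, which satisfies $\dot{\Lambda}^{\leftarrow}(t)=D_xf(T-t,x(T-t),u(T-t))^\top\Lambda^{\leftarrow}(t)+v(T-t)$. The following are equivalent: (i) the $x$-system is strongly infinitesimally contracting with respect to $\|\cdot\|$ with rate $c$, i.e. for all $t\in[0,T]$ and $\tilde u\in U$, the one-sided Lipschitz constant of $x\mapsto f(t,x,\tilde u)$ with respect to $\|\cdot\|$ is at most $-c$; (ii) the $\Lambda^{\leftarrow}$-system is strongly infinitesimally contracting with respect to $\|\cdot\|_\star$ with rate $c$, i.e. for all $t\in[0,T]$, $\xi\in\mathbb{R}^n$, $\tilde u\in U$, $w\in\mathbb{R}^n$, the one-sided Lipschitz constant of $\Lambda\mapsto D_xf(T-t,\xi,\tilde u)^\top\Lambda+w$ with respect to $\|\cdot\|_\star$ is at most $-c$.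
   Context: The dual norm is $\|z\|_\star=\sup_{\|y\|\le1}y^\top z$. For a matrix $A$ and a norm $\|\cdot\|$, the induced norm is $\|A\|=\sup_{\|x\|=1}\|Ax\|$ and the logarithmic norm is $\mu(A)=\lim_{h\to0^+}(\|I_n+hA\|-1)/h$. For a continuously differentiable $F:\mathbb{R}^n\to\mathbb{R}^n$, its one-sided Lipschitz constant with respect to a norm is $\sup_{x\in\mathbb{R}^n}\mu(DF(x))$, with $\mu$ computed in that norm. *)

(* Defs.v *)
From HB Require Import structures.
From mathcomp Require Import all_boot all_order all_algebra.
From mathcomp Require Import all_classical all_reals all_analysis.
Set Implicit Arguments. Unset Strict Implicit. Unset Printing Implicit Defensive.
Import Order.TTheory GRing.Theory Num.Theory.
Import numFieldNormedType.Exports.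
Local Open Scope classical_set_scope.
Local Open Scope ring_scope.

Section Defs.
Variables (R : realType) (n : nat).

Definition is_norm (N : 'cV[R]_n -> R) : Prop :=
  [/\ (forall x, N x = 0 -> x = 0),
      (forall (a : R) x, N (a *: x) = `|a| * N x) &
      (forall x y, N (x + y) <= N x + N y)].

Definition dual_norm (N : 'cV[R]_n -> R) (z : 'cV[R]_n) : R :=
  sup [set (y^T *m z) 0 0 | y in [set y | N y <= 1]].

Definition induced_norm (N : 'cV[R]_n -> R) (A : 'M[R]_n) : R :=
  sup [set N (A *m x) | x in [set x | N x = 1]].

Definition log_norm (N : 'cV[R]_n -> R) (A : 'M[R]_n) : R :=
  lim ((fun h : R => (induced_norm N (1%:M + h *: A) - 1) / h) @ at_right 0).

Definition jacob (F : 'cV[R]_n -> 'cV[R]_n) (x : 'cV[R]_n) : 'M[R]_n :=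
  \matrix_(i, j) ('D_(delta_mx j 0) F x) i 0.

Definition osL (N : 'cV[R]_n -> R) (F : 'cV[R]_n -> 'cV[R]_n) : \bar R :=
  ereal_sup [set (log_norm N (jacob F x))%:E | x in [set: 'cV[R]_n]].

End Defs.

(* Main.v *)
Require Import Defs.
From HB Require Import structures.
From mathcomp Require Import all_boot all_order all_algebra.
From mathcomp Require Import all_classical all_reals all_analysis.
From mathcomp Require Import ring lra.
Import Order.TTheory GRing.Theory Num.Theory.
Import numFieldNormedType.Exports.
Local Open Scope classical_set_scope.
Local Open Scope ring_scope.
Set Implicit Arguments. Unset Strict Implicit. Unset Printing Implicit Defensive.

Lemma infT_le (R : realType) (F : R -> R) b t :
  (forall s, 0 <= s -> b <= F s) -> 0 <= t ->
  inf [set F s | s in [set s | 0 <= s]] <= F t.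
Proof.
move=> hb ht; rewrite /inf lerNl.
apply: sup_upper_bound.
  split; first by exists (- F t); exists (F t); [exists t|].
  exists (- b) => _ [_ [s hs <-] <-]; rewrite lerN2; exact: hb.
by exists (F t); [exists t|].
Qed.

Lemma le_infT (R : realType) (F : R -> R) a :
  (forall s, 0 <= s -> a <= F s) ->
  a <= inf [set F s | s in [set s | 0 <= s]].
Proof.
move=> ha; apply: lb_le_inf; first by exists (F 0); exists 0; [exact: lexx|].
by move=> _ [s hs <-]; exact: ha.
Qed.

Definition subl (R : realType) n (p : 'cV[R]_n -> R) :=
  (forall x y, p (x + y) <= p x + p y) /\
  (forall (a : R) x, 0 < a -> p (a *: x) = a * p x).

Lemma subl0 (R : realType) n (p : 'cV[R]_n -> R) : subl p -> p 0 = 0.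
Proof.
move=> [_ hh]; have := hh 2 0 (ltr0Sn _ 1); rewrite scaler0 => /eqP.
rewrite -subr_eq0 -{1}(mul1r (p 0)) -mulrBl mulf_eq0 => /orP[|/eqP//].
by rewrite (_ : 1 - 2 = -1 :> R) ?oppr_eq0 ?oner_eq0 //; lra.
Qed.

Lemma subl_hom0 (R : realType) n (p : 'cV[R]_n -> R) a x :
  subl p -> 0 <= a -> p (a *: x) = a * p x.
Proof.
move=> hp; rewrite le_eqVlt => /orP[/eqP<-|ha]; last exact: hp.2.
by rewrite scale0r mul0r subl0.
Qed.

Definition Qop (R : realType) n (p : 'cV[R]_n -> R) (e : 'cV[R]_n) x :=
  inf [set p (x + t *: e) - t * p e | t in [set t | 0 <= t]].

Lemma Q_lb (R : realType) n (p : 'cV[R]_n -> R) e x t : subl p -> 0 <= t ->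
  - p (- x) <= p (x + t *: e) - t * p e.
Proof.
move=> hp ht; rewrite -(subl_hom0 _ hp ht).
have := hp.1 (x + t *: e) (- x); rewrite [x + _]addrC addrK => h; lra.
Qed.

Lemma Q_le (R : realType) n (p : 'cV[R]_n -> R) e x t : subl p -> 0 <= t ->
  Qop p e x <= p (x + t *: e) - t * p e.
Proof. move=> hp ht; apply: (infT_le (b := - p (- x))) => // s hs; exact: Q_lb. Qed.

Lemma Q_lep (R : realType) n (p : 'cV[R]_n -> R) e x : subl p -> Qop p e x <= p x.
Proof. by move=> hp; have := Q_le e x hp (lexx 0); rewrite scale0r addr0 mul0r subr0. Qed.

Lemma Q_ge (R : realType) n (p : 'cV[R]_n -> R) e x : subl p -> - p (- x) <= Qop p e x.
Proof. by move=> hp; apply: le_infT => s hs; exact: Q_lb. Qed.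

Lemma Q_subl (R : realType) n (p : 'cV[R]_n -> R) e : subl p -> subl (Qop p e).
Proof.
move=> hp; split.
  move=> x y.
  have H : forall s t, 0 <= s -> 0 <= t -> Qop p e (x + y) <=
      (p (x + s *: e) - s * p e) + (p (y + t *: e) - t * p e).
    move=> s t hs ht.
    apply: (le_trans (Q_le e (x + y) hp (addr_ge0 hs ht))).
    have := hp.1 (x + s *: e) (y + t *: e).
    rewrite (_ : x + s *: e + (y + t *: e) = x + y + (s + t) *: e); last first.
      by rewrite scalerDl; rewrite !addrA; congr (_ + _); rewrite -!addrA; congr (_ + _); rewrite addrC.
    move=> h; rewrite mulrDl; lra.
  have H2 : forall t, 0 <= t -> Qop p e (x + y) - (p (y + t *: e) - t * p e) <= Qop p e x.
    move=> t ht; apply: le_infT => s hs; have := H s t hs ht; lra.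
  suff : Qop p e (x + y) - Qop p e x <= Qop p e y by lra.
  apply: le_infT => t ht; have := H2 t ht; lra.
have Hge : forall (a : R) x, 0 < a -> a * Qop p e x <= Qop p e (a *: x).
  move=> a x ha; apply: le_infT => t ht.
  have hta : 0 <= t / a by rewrite divr_ge0 // ltW.
  have := Q_le e x hp hta.
  rewrite (_ : a *: x + t *: e = a *: (x + (t / a) *: e)); last first.
    by rewrite scalerDr scalerA mulrCA divff ?gt_eqF // mulr1.
  rewrite hp.2 //.
  rewrite -(ler_pM2l ha) => h; apply: (le_trans h).
  rewrite mulrBr (_ : a * (t / a * p e) = t * p e) //.
  by rewrite mulrA [a * _]mulrCA divff ?gt_eqF // mulr1.
move=> a x ha; apply/eqP; rewrite eq_le Hge // andbT.
have hia : 0 < a^-1 by rewrite invr_gt0.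
have := Hge _ (a *: x) hia; rewrite scalerA mulVf ?gt_eqF // scale1r.
by rewrite -(ler_pM2l ha) mulrA divff ?gt_eqF // mul1r.
Qed.

Lemma Q_lin (R : realType) n (p : 'cV[R]_n -> R) e : subl p ->
  Qop p e e + Qop p e (- e) <= 0.
Proof.
move=> hp; have h1 := Q_lep e e hp.
have := Q_le e (- e) hp ler01; rewrite scale1r addNr subl0 // mul1r sub0r.
lra.
Qed.

Lemma lin_keep (R : realType) n (p q : 'cV[R]_n -> R) d : subl q ->
  (forall x, q x <= p x) -> p d + p (- d) <= 0 ->
  q d + q (- d) <= 0 /\ q d = p d.
Proof.
move=> hq hqp hd; have h1 := hqp d; have h2 := hqp (- d).
have h0 := hq.1 d (- d); rewrite addrN subl0 // in h0.
split; first lra.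
apply/eqP; rewrite eq_le h1 /=; lra.
Qed.

Fixpoint itQ (R : realType) n (p : 'cV[R]_n -> R) (s : seq 'cV[R]_n) :=
  match s with [::] => p | e :: s' => itQ (Qop p e) s' end.

Lemma itQ_props (R : realType) n (s : seq 'cV[R]_n) : forall (p : 'cV[R]_n -> R),
  subl p -> [/\ subl (itQ p s), (forall x, itQ p s x <= p x),
   (forall d, p d + p (- d) <= 0 -> itQ p s d + itQ p s (- d) <= 0 /\ itQ p s d = p d) &
   (forall e, e \in s -> itQ p s e + itQ p s (- e) <= 0)].
Proof.
elim: s => [|e s IH] p hp /=.
  split; [done | by move=> x; exact: lexx | by move=> d hd; split | by move=> e; rewrite in_nil].
have hq := Q_subl e hp.
have [h1 h2 h3 h4] := IH _ hq.
split=> //.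
- by move=> x; apply: le_trans (h2 x) (Q_lep e x hp).
- move=> d hd; have [k1 k2] := lin_keep hq (fun x => Q_lep e x hp) hd.
  by have [k3 k4] := h3 d k1; split => //; rewrite k4.
- move=> e'; rewrite in_cons => /orP[/eqP->|he]; last exact: h4.
  by have [] := h3 e (Q_lin e hp).
Qed.

Lemma lin_add (R : realType) n (q : 'cV[R]_n -> R) d x : subl q ->
  q d + q (- d) <= 0 -> q (x + d) = q x + q d.
Proof.
move=> hq hd; apply/eqP; rewrite eq_le hq.1 /=.
have := hq.1 (x + d) (- d); rewrite addrK => h; lra.
Qed.

Lemma lin_neg (R : realType) n (q : 'cV[R]_n -> R) d : subl q ->
  q d + q (- d) <= 0 -> q (- d) = - q d.
Proof.
move=> hq hd; have := hq.1 d (- d); rewrite addrN subl0 // => h; lra.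
Qed.

Lemma lin_scale (R : realType) n (q : 'cV[R]_n -> R) d a : subl q ->
  q d + q (- d) <= 0 -> q (a *: d) = a * q d.
Proof.
move=> hq hd; have [ha|ha] := leP 0 a; first exact: subl_hom0.
have -> : a *: d = (- a) *: (- d) by rewrite scaleNr scalerN opprK.
rewrite subl_hom0 //; last by rewrite oppr_ge0 ltW.
by rewrite lin_neg // mulrNN.
Qed.

Lemma lin_scale_dir (R : realType) n (q : 'cV[R]_n -> R) d a : subl q ->
  q d + q (- d) <= 0 -> q (a *: d) + q (- (a *: d)) <= 0.
Proof.
move=> hq hd; rewrite -scaleNr !lin_scale // mulNr addrN; exact: lexx.
Qed.

Lemma lin_sum (R : realType) n (q : 'cV[R]_n -> R) (I : Type) (r : seq I) (F : I -> 'cV[R]_n) :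
  subl q -> (forall i, q (F i) + q (- F i) <= 0) ->
  q (\sum_(i <- r) F i) = \sum_(i <- r) q (F i).
Proof.
move=> hq hF; apply: (big_rec2 (fun a b => q a = b)); first exact: subl0.
by move=> i y1 y2 _ <-; rewrite addrC lin_add // addrC.
Qed.

Lemma norm_subl (R : realType) n (N : 'cV[R]_n -> R) : is_norm N -> subl N.
Proof.
move=> [h0 hZ hD]; split => // a x ha; by rewrite hZ gtr0_norm.
Qed.

Lemma colsum (R : realType) n (y : 'cV[R]_n) :
  y = \sum_(i < n) y i 0 *: delta_mx i 0.
Proof.
rewrite {1}(matrix_sum_delta y); apply: eq_bigr => i _; rewrite big_ord1.
by [].
Qed.

Lemma HB (R : realType) n (N : 'cV[R]_n -> R) : is_norm N -> forall v,
  exists z : 'cV[R]_n, (forall y, (z^T *m y) 0 0 <= N y) /\ (z^T *m v) 0 0 = N v.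
Proof.
move=> hN v; have hs := norm_subl hN.
pose p1 := Qop N v.
have hp1 := Q_subl v hs.
have p1v : p1 v = N v.
  apply/eqP; rewrite eq_le Q_lep //=.
  apply: le_infT => s hs0.
  have -> : v + s *: v = (1 + s) *: v by rewrite scalerDl scale1r.
  rewrite subl_hom0 //; last by rewrite addr_ge0.
  rewrite mulrDl mul1r addrK; exact: lexx.
pose q := itQ p1 [seq delta_mx i 0 | i <- enum 'I_n].
have [hq hqp hqk hql] := itQ_props [seq delta_mx i 0 | i <- enum 'I_n] hp1.
have hql' : forall i : 'I_n, q (delta_mx i 0) + q (- delta_mx i 0) <= 0.
  by move=> i; apply: hql; apply: map_f; rewrite mem_enum.
exists (\col_i q (delta_mx i 0)).
have key : forall y, ((\col_i q (delta_mx i 0))^T *m y) 0 0 = q y.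
  move=> y; rewrite {2}(colsum y) lin_sum //; last first.
    by move=> i; apply: lin_scale_dir.
  rewrite !mxE; apply: eq_bigr => i _; rewrite !mxE lin_scale // mulrC.
  by [].
split.
  move=> y; rewrite key; apply: le_trans (hqp y) _; exact: Q_lep.
rewrite key /q; have [_ ->] := hqk v (Q_lin v hs); exact: p1v.
Qed.

Lemma normN0 (R : realType) n (N : 'cV[R]_n -> R) : is_norm N -> N 0 = 0.
Proof. by move=> [_ hZ _]; have := hZ 0 0; rewrite scale0r normr0 mul0r. Qed.

Lemma normN_ge0 (R : realType) n (N : 'cV[R]_n -> R) x : is_norm N -> 0 <= N x.
Proof.
move=> hN; have [_ hZ hD] := hN; have := hD x (- x); rewrite addrN normN0 //.
rewrite -scaleN1r hZ normrN normr1 mul1r => h; lra.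
Qed.

Lemma normN_N (R : realType) n (N : 'cV[R]_n -> R) x : is_norm N -> N (- x) = N x.
Proof. by move=> [_ hZ _]; rewrite -scaleN1r hZ normrN normr1 mul1r. Qed.

Lemma normN_dist (R : realType) n (N : 'cV[R]_n -> R) x y : is_norm N ->
  `|N x - N y| <= N (x - y).
Proof.
move=> hN; have [_ _ hD] := hN; rewrite ler_norml; apply/andP; split.
  have := hD (y - x) x; rewrite subrK -opprB normN_N // => h; lra.
have := hD (x - y) y; rewrite subrK => h; lra.
Qed.

Lemma normN_sum (R : realType) n (N : 'cV[R]_n -> R) (y : 'cV[R]_n) : is_norm N ->
  N y <= \sum_(i < n) `|y i 0| * N (delta_mx i 0).
Proof.
move=> hN; have [_ hZ hD] := hN; rewrite {1}(colsum y).
apply: (big_rec2 (fun a b => N a <= b)); first by rewrite normN0.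
move=> i a b _ hab; apply: le_trans (hD _ _) _; rewrite hZ; lra.
Qed.

Lemma entry_le_mxnorm (R : realType) n (r : 'rV[R]_n) i : `|r 0 i| <= `|r|.
Proof.
rewrite [leRHS]/Num.Def.normr /= mx_normrE.
have := le_bigmax 0 (fun ij : 'I_1 * 'I_n => `|r ij.1 ij.2|) (ord0, i).
by [].
Qed.

Lemma norm_lower (R : realType) n (N : 'cV[R]_n -> R) : is_norm N ->
  exists C, 0 < C /\ forall (y : 'cV[R]_n) i, `|y i 0| <= C * N y.
Proof.
move=> hN; have [hdef hZ hD] := hN.
have [[y0 hy0]|hno] := pselect (exists y : 'cV[R]_n, y != 0); last first.
  exists 1; split => // y i.
  have -> : y = 0 by apply/eqP; apply: contra_notT hno => hy; exists y.
  by rewrite mxE normr0 normN0 // mulr0.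
pose M := \sum_(i < n) N (delta_mx i 0).
have M0 : 0 <= M by apply: sumr_ge0 => i _; exact: normN_ge0.
pose g := fun r : 'rV[R]_n => N r^T.
have hgle : forall r, g r <= M * `|r|.
  move=> r; apply: le_trans (normN_sum _ hN) _.
  rewrite /M mulr_suml; apply: ler_sum => i _; rewrite mulrC.
  by apply: ler_wpM2l; [exact: normN_ge0 | rewrite mxE; exact: entry_le_mxnorm].
have hcont : continuous g.
  move=> x; apply/(@cvgrPdist_lt _ _ _ (nbhs x) (nbhs_filter x)) => e he. apply/(@nbhs_normP R ('rV[R]_n : pseudoMetricNormedZmodType R)).
  have hM1 : 0 < M + 1 by lra.
  exists (e / (M + 1)); first by rewrite /= divr_gt0.
  move=> s /= hs; apply: le_lt_trans (normN_dist _ _ hN) _.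
  rewrite -linearB /=; apply: le_lt_trans (hgle (x - s)) _.
  rewrite ltr_pdivlMr // in hs.
  have : M * `|x - s| <= (M + 1) * `|x - s| by apply: ler_wpM2r => //; lra.
  move=> h; apply: le_lt_trans h _; rewrite mulrC //.
pose A := [set r : 'rV[R]_n | `|r| = 1].
have hy0T : `|y0^T| != 0 by rewrite normr_eq0 trmx_eq0.
have hA0 : A !=set0.
  exists (`|y0^T|^-1 *: y0^T); rewrite /A /= normrZ ger0_norm ?invr_ge0 //.
  by rewrite mulVf.
have cA : compact A.
  apply: bounded_closed_compact.
    exists 1; split => // M' hM' x Ax /=; rewrite Ax ltW //.
  apply: (@preimage_closed _ _ (@Num.Def.normr R _) [set x : R | x = 1]); last exact: closed_eq.
  by move=> x _; exact: norm_continuous.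
have [c cA' hc] := EVT_min_rV hA0 cA (continuous_subspaceT hcont).
have cA1 : `|c| = 1 by move/set_mem: cA'.
have c0 : c != 0.
  by apply/eqP => h; move: cA1; rewrite h normr0 => /esym/eqP; rewrite oner_eq0.
have hm : 0 < g c.
  rewrite lt_neqAle normN_ge0 // andbT eq_sym; apply/eqP => /hdef /eqP.
  by rewrite trmx_eq0 (negbTE c0).
exists (g c)^-1; split; first by rewrite invr_gt0.
move=> y i; have [->|hy] := eqVneq y 0.
  by rewrite mxE normr0 normN0 // mulr0.
have hpos : 0 < `|y^T| by rewrite normr_gt0 trmx_eq0.
have hA : (`|y^T|^-1 *: y^T) \in A.
  apply: mem_set; rewrite /A /= normrZ ger0_norm ?invr_ge0 ?normr_ge0 //.
  by rewrite mulVf ?gt_eqF.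
have := hc _ hA; rewrite /g linearZ /= trmxK hZ ger0_norm ?invr_ge0 ?normr_ge0 // => h.
have h2 : g c * `|y^T| <= N y.
  by have := ler_wpM2r (ltW hpos) h; rewrite mulrAC mulVf ?gt_eqF // mul1r.
have h3 : `|y^T| <= (g c)^-1 * N y.
  by rewrite -(ler_pM2l hm) mulrA mulfV ?gt_eqF // mul1r.
have h4 := entry_le_mxnorm y^T i; rewrite mxE in h4. exact: (le_trans h4 h3).
Qed.

Lemma dotE (R : realType) n (y z : 'cV[R]_n) :
  (y^T *m z) 0 0 = \sum_i y i 0 * z i 0.
Proof. by rewrite mxE; apply: eq_bigr => i _; rewrite mxE. Qed.

Lemma dotC (R : realType) n (y z : 'cV[R]_n) :
  (y^T *m z) 0 0 = (z^T *m y) 0 0.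
Proof. by rewrite !dotE; apply: eq_bigr => i _; rewrite mulrC. Qed.

Lemma dotZl (R : realType) n (a : R) (y z : 'cV[R]_n) :
  ((a *: y)^T *m z) 0 0 = a * (y^T *m z) 0 0.
Proof. by rewrite linearZ /= -scalemxAl mxE. Qed.

Lemma dotZr (R : realType) n (a : R) (y z : 'cV[R]_n) :
  (y^T *m (a *: z)) 0 0 = a * (y^T *m z) 0 0.
Proof. by rewrite -scalemxAr mxE. Qed.

Lemma dot0l (R : realType) n (z : 'cV[R]_n) : ((0 : 'cV[R]_n)^T *m z) 0 0 = 0.
Proof. by rewrite trmx0 mul0mx mxE. Qed.

Lemma dot0r (R : realType) n (y : 'cV[R]_n) : (y^T *m (0 : 'cV[R]_n)) 0 0 = 0.
Proof. by rewrite mulmx0 mxE. Qed.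

Lemma dual_has_sup (R : realType) n (N : 'cV[R]_n -> R) (z : 'cV[R]_n) : is_norm N ->
  has_sup [set (y^T *m z) 0 0 | y in [set y | N y <= 1]].
Proof.
move=> hN; have [C [C0 hC]] := norm_lower hN.
split; first by exists 0; exists (0 : 'cV[R]_n); [rewrite /= normN0 // ler01 | exact: dot0l].
exists (\sum_i C * `|z i 0|) => _ [y /= hy <-]; rewrite dotE.
apply: ler_sum => i _; apply: le_trans (ler_norm _) _; rewrite normrM.
apply: ler_wpM2r => //; apply: le_trans (hC y i) _.
by rewrite -[leRHS]mulr1; apply: ler_wpM2l => //; exact: ltW.
Qed.

Lemma dual_ge (R : realType) n (N : 'cV[R]_n -> R) (y z : 'cV[R]_n) : is_norm N -> N y <= 1 ->
  (y^T *m z) 0 0 <= dual_norm N z.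
Proof. by move=> hN hy; apply: (sup_upper_bound (dual_has_sup z hN)); exists y. Qed.

Lemma dual_ge0 (R : realType) n (N : 'cV[R]_n -> R) (z : 'cV[R]_n) : is_norm N -> 0 <= dual_norm N z.
Proof.
by move=> hN; have := dual_ge z hN (y := 0); rewrite dot0l normN0 // ler01; apply.
Qed.

Lemma dual_le (R : realType) n (N : 'cV[R]_n -> R) (z : 'cV[R]_n) b : is_norm N ->
  (forall y, N y <= 1 -> (y^T *m z) 0 0 <= b) -> dual_norm N z <= b.
Proof.
move=> hN hb; apply: ge_sup.
  by exists 0; exists (0 : 'cV[R]_n); [rewrite /= normN0 // ler01 | exact: dot0l].
by move=> _ [y hy <-]; exact: hb.
Qed.

Lemma normN_scale_inv (R : realType) n (N : 'cV[R]_n -> R) (y : 'cV[R]_n) : is_norm N -> N y != 0 ->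
  N ((N y)^-1 *: y) = 1.
Proof.
move=> hN hy; have [_ hZ _] := hN.
by rewrite hZ ger0_norm ?invr_ge0 ?normN_ge0 // mulVf.
Qed.

Lemma dual_bound (R : realType) n (N : 'cV[R]_n -> R) (y z : 'cV[R]_n) : is_norm N ->
  (y^T *m z) 0 0 <= dual_norm N z * N y.
Proof.
move=> hN; have [hdef hZ hD] := hN.
have [hy|hy] := eqVneq (N y) 0.
  by rewrite hy mulr0 (hdef _ hy) dot0l.
have hpos : 0 < N y by rewrite lt_neqAle eq_sym hy normN_ge0.
have := dual_ge z hN (y := (N y)^-1 *: y); rewrite normN_scale_inv // lexx dotZl.
move=> /(_ isT) h.
by have := ler_wpM2r (ltW hpos) h; rewrite mulrAC mulVf ?gt_eqF // mul1r.
Qed.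

Lemma dual_scale_le (R : realType) n (N : 'cV[R]_n -> R) (z : 'cV[R]_n) (a : R) : is_norm N -> 0 < a ->
  dual_norm N (a *: z) <= a * dual_norm N z.
Proof.
move=> hN ha; apply: dual_le => // y hy; rewrite dotZr.
by apply: ler_wpM2l; [exact: ltW | exact: dual_ge].
Qed.

Lemma dual_scale (R : realType) n (N : 'cV[R]_n -> R) (z : 'cV[R]_n) (a : R) : is_norm N -> 0 < a ->
  dual_norm N (a *: z) = a * dual_norm N z.
Proof.
move=> hN ha; apply/eqP; rewrite eq_le dual_scale_le //=.
have hia : 0 < a^-1 by rewrite invr_gt0.
have := dual_scale_le (a *: z) hN hia; rewrite scalerA mulVf ?gt_eqF // scale1r.
by rewrite -(ler_pM2l ha) mulrA divff ?gt_eqF // mul1r.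
Qed.

Lemma mul_self_ge0 (R : realType) (x : R) : 0 <= x * x.
Proof. by rewrite -expr2 sqr_ge0. Qed.

Lemma dual_def (R : realType) n (N : 'cV[R]_n -> R) (z : 'cV[R]_n) : is_norm N ->
  dual_norm N z = 0 -> z = 0.
Proof.
move=> hN hz; have := dual_bound z z hN; rewrite hz mul0r dotE => hs.
have hs0 : \sum_i z i 0 * z i 0 = 0.
  apply/eqP; rewrite eq_le hs /=; apply: sumr_ge0 => i _; exact: mul_self_ge0.
apply/matrixP => i j; rewrite (ord1 j) !mxE.
have := @psumr_eq0P _ _ xpredT (fun i => z i 0 * z i 0) (fun i _ => mul_self_ge0 (z i 0)) hs0 i isT.
by move/eqP; rewrite mulf_eq0 orbb => /eqP.
Qed.

Lemma dual0 (R : realType) n (N : 'cV[R]_n -> R) : is_norm N -> dual_norm N 0 = 0.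
Proof.
move=> hN; apply/eqP; rewrite eq_le dual_ge0 // andbT.
by apply: dual_le => // y _; rewrite dot0r.
Qed.

Lemma HB_dual (R : realType) n (N : 'cV[R]_n -> R) : is_norm N -> forall v,
  exists z, dual_norm N z <= 1 /\ (v^T *m z) 0 0 = N v.
Proof.
move=> hN v; have [z [hz1 hz2]] := HB hN v; exists z; split; last by rewrite dotC.
by apply: dual_le => // y hy; rewrite dotC; apply: le_trans (hz1 y) hy.
Qed.

Lemma N_mul_bound (R : realType) n (N : 'cV[R]_n -> R) (B : 'M[R]_n) : is_norm N ->
  exists K, forall x, N (B *m x) <= K * N x.
Proof.
move=> hN; have [C [C0 hC]] := norm_lower hN.
exists (\sum_i (\sum_j `|B i j| * C) * N (delta_mx i 0)) => x.
apply: le_trans (normN_sum _ hN) _; rewrite mulr_suml; apply: ler_sum => i _.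
rewrite mulrAC; apply: ler_wpM2r; first exact: normN_ge0.
rewrite mxE mulr_suml; apply: le_trans (ler_norm_sum _ _ _) _.
apply: ler_sum => j _; rewrite normrM -mulrA; apply: ler_wpM2l => //; exact: hC.
Qed.

Lemma induced_dual (R : realType) n (N : 'cV[R]_n -> R) (B : 'M[R]_n) : is_norm N ->
  induced_norm (dual_norm N) B^T = induced_norm N B.
Proof.
move=> hN; have [hdef hZ hD] := hN; rewrite /induced_norm.
have [[v0 hv0]|hno] := pselect (exists v : 'cV[R]_n, v != 0); last first.
  have all0 : forall v : 'cV[R]_n, v = 0.
    by move=> v; apply/eqP; apply: contra_notT hno => hv; exists v.
  have E1 : [set N (B *m x) | x in [set x | N x = 1]] = set0.
    apply/seteqP; split => // y [x hx hy]; move: hx; rewrite /= (all0 x) normN0 //.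
    by move/esym/eqP; rewrite oner_eq0.
  have E2 : [set dual_norm N (B^T *m x) | x in [set x | dual_norm N x = 1]] = set0.
    apply/seteqP; split => // y [x hx hy]; move: hx; rewrite /= (all0 x) dual0 //.
    by move/esym/eqP; rewrite oner_eq0.
  by rewrite E1 E2.
set S1 := [set N (B *m x) | x in [set x | N x = 1]].
set S2 := [set dual_norm N (B^T *m x) | x in [set x | dual_norm N x = 1]].
have hNv0 : N v0 != 0 by apply: contra hv0 => /eqP /hdef ->.
have hNv0p : 0 < N v0 by rewrite lt_neqAle eq_sym hNv0 normN_ge0.
pose x0 := (N v0)^-1 *: v0.
have hx0 : N x0 = 1 by exact: normN_scale_inv.
have S1ne : S1 !=set0 by exists (N (B *m x0)); exists x0.
have [K hK] := N_mul_bound B hN.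
have S1sup : has_sup S1.
  by split => //; exists K => _ [x hx <-]; have := hK x; rewrite hx mulr1.
have IN0 : 0 <= sup S1.
  apply: le_trans (normN_ge0 (B *m x0) hN) _; apply: sup_upper_bound => //.
  by exists x0.
have F1 : forall x, N (B *m x) <= sup S1 * N x.
  move=> x; have [hx|hx] := eqVneq (N x) 0.
    by rewrite hx mulr0 (hdef _ hx) mulmx0 normN0.
  have hxp : 0 < N x by rewrite lt_neqAle eq_sym hx normN_ge0.
  have : N (B *m ((N x)^-1 *: x)) <= sup S1.
    by apply: sup_upper_bound => //; exists ((N x)^-1 *: x) => //; exact: normN_scale_inv.
  rewrite -scalemxAr hZ ger0_norm ?invr_ge0 ?normN_ge0 // => h.
  have := ler_wpM2r (ltW hxp) h; rewrite mulrAC mulVf ?gt_eqF // mul1r.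
  by [].
have F2 : forall z, dual_norm N (B^T *m z) <= sup S1 * dual_norm N z.
  move=> z; apply: dual_le => // y hy.
  have -> : (y^T *m (B^T *m z)) 0 0 = ((B *m y)^T *m z) 0 0.
    by rewrite trmx_mul mulmxA.
  apply: le_trans (dual_bound _ _ hN) _.
  have h1 : N (B *m y) <= sup S1.
    apply: le_trans (F1 y) _; rewrite -[leRHS]mulr1; exact: ler_wpM2l.
  rewrite mulrC; apply: ler_wpM2r => //; exact: dual_ge0.
have [z0 [hz0 hz0v]] := HB_dual hN v0.
have hz01 : dual_norm N z0 = 1.
  apply/eqP; rewrite eq_le hz0 /=.
  have := dual_bound v0 z0 hN; rewrite hz0v -{1}(mul1r (N v0)) ler_pM2r //.
have S2ne : S2 !=set0 by exists (dual_norm N (B^T *m z0)); exists z0.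
have S2sup : has_sup S2.
  split => //; exists (sup S1) => _ [z hz <-]; have := F2 z; rewrite hz mulr1.
  by [].
have s20 : 0 <= sup S2.
  apply: le_trans (dual_ge0 (B^T *m z0) hN) _; apply: sup_upper_bound => //.
  by exists z0.
have F3 : forall w, dual_norm N (B^T *m w) <= sup S2 * dual_norm N w.
  move=> w; have [hw|hw] := eqVneq (dual_norm N w) 0.
    by rewrite hw mulr0 (dual_def hN hw) mulmx0 dual0.
  have hwp : 0 < dual_norm N w by rewrite lt_neqAle eq_sym hw dual_ge0.
  have hinv : 0 < (dual_norm N w)^-1 by rewrite invr_gt0.
  have : dual_norm N (B^T *m ((dual_norm N w)^-1 *: w)) <= sup S2.
    apply: sup_upper_bound => //; exists ((dual_norm N w)^-1 *: w) => //.
    by rewrite /= dual_scale // mulVf.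
  rewrite -scalemxAr dual_scale // => h.
  have := ler_wpM2r (ltW hwp) h; rewrite mulrAC mulVf ?gt_eqF // mul1r.
  by [].
apply/eqP; rewrite eq_le; apply/andP; split.
  apply: ge_sup => // _ [z hz <-]; have := F2 z; rewrite hz mulr1; by [].
apply: ge_sup => // _ [x hx <-].
have [w [hw1 hw2]] := HB_dual hN (B *m x).
rewrite -hw2 trmx_mul -mulmxA.
apply: le_trans (dual_bound _ _ hN) _; rewrite hx mulr1.
apply: le_trans (F3 w) _; rewrite -[leRHS]mulr1; exact: ler_wpM2l.
Qed.

Lemma log_norm_dual (R : realType) n (N : 'cV[R]_n -> R) (A : 'M[R]_n) : is_norm N ->
  log_norm (dual_norm N) A^T = log_norm N A.
Proof.
move=> hN; rewrite /log_norm.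
have -> : (fun h : R => (induced_norm (dual_norm N) (1%:M + h *: A^T) - 1) / h) =
          (fun h : R => (induced_norm N (1%:M + h *: A) - 1) / h).
  rewrite funeqE => h; rewrite -(induced_dual _ hN); congr ((induced_norm _ _ - 1) / h).
  by rewrite linearD /= linearZ /= tr_scalar_mx.
by [].
Qed.

Lemma jacob_affine (R : realType) n (A : 'M[R]_n) (w xi : 'cV[R]_n) :
  jacob (fun L => A *m L + w) xi = A.
Proof.
apply/matrixP => i j; rewrite mxE.
have -> : derive (fun L => A *m L + w) xi (delta_mx j 0) = A *m delta_mx j 0.
  rewrite /derive; apply: lim_near_cst; first exact: norm_hausdorff.
  near=> h; rewrite /= mulmxDr -scalemxAr -[_ *: _ + _ + w]addrA addrK scalerA mulVf ?scale1r //.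
  near: h; exact: nbhs_dnbhs_neq.
by rewrite -colE mxE.
Unshelve. all: by end_near.
Qed.

Unset Implicit Arguments.

Lemma osL_affine (R : realType) n (N : 'cV[R]_n -> R) (A : 'M[R]_n) (w : 'cV[R]_n) :
  is_norm N -> osL (dual_norm N) (fun L => A^T *m L + w) = (log_norm N A)%:E.
Proof.
move=> hN; rewrite /osL.
have -> : [set (log_norm (dual_norm N) (jacob (fun L => A^T *m L + w) x))%:E
            | x in [set: 'cV[R]_n]] = [set (log_norm N A)%:E].
  apply/seteqP; split => [_ [x _ <-]|_ ->].
    by rewrite /= jacob_affine log_norm_dual.
  by exists 0 => //; rewrite jacob_affine log_norm_dual.
exact: ereal_sup1.
Qed.

Theorem theorem3 (R : realType) (n k : nat) (T c : R)
  (U : set 'cV[R]_k) (f : R -> 'cV[R]_n -> 'cV[R]_k -> 'cV[R]_n)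
  (N : 'cV[R]_n -> R) :
  0 < T -> 0 < c ->
  (* f continuous on [0,T] x R^n x U *)
  {within `[0, T] `*` [set: 'cV[R]_n] `*` U,
     continuous (fun p : R * 'cV[R]_n * 'cV[R]_k => f p.1.1 p.1.2 p.2)} ->
  (* f continuously differentiable in its second argument *)
  (forall t x u, t \in `[0, T] -> u \in U -> differentiable (f t ^~ u) x) ->
  {within `[0, T] `*` [set: 'cV[R]_n] `*` U,
     continuous (fun p : R * 'cV[R]_n * 'cV[R]_k =>
                   jacob (f p.1.1 ^~ p.2) p.1.2)} ->
  is_norm N ->
  (forall t u, t \in `[0, T] -> u \in U ->
     (osL N (fun x => f t x u) <= (- c)%:E)%E)
  <->
  (forall t (xi : 'cV[R]_n) u (w : 'cV[R]_n), t \in `[0, T] -> u \in U ->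
     (osL (dual_norm N)
        (fun L => (jacob (f (T - t)%R ^~ u) xi)^T *m L + w)%R <= (- c)%:E)%E).
Proof.
move=> T0 c0 _ _ _ hN.
have hTt : forall t, t \in `[0, T] -> (T - t) \in `[0, T].
  by move=> t; rewrite !in_itv /= => /andP[h1 h2]; apply/andP; split; lra.
split.
  move=> H t xi u w ht hu; rewrite osL_affine //.
  apply: le_trans (H _ _ (hTt _ ht) hu); rewrite /osL.
  by apply: ereal_sup_ubound; exists xi.
move=> H t u ht hu; rewrite /osL; apply: ge_ereal_sup => _ [x _ <-].
have e : T - (T - t) = t by rewrite opprB addrC subrK.
have := H (T - t) x u 0 (hTt _ ht) hu; rewrite e.
by rewrite osL_affine.
Qed.
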